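(* Let $(G,\sigma)$ be a colored planar, color-connected graph with vertices $s,t$ connected in $G$. If $\pi^*$ is an $s$-$t$ path minimizing $|\sigma(\pi^* )|$ and $C^*$ is a color-hitting set of minimum cardinality, then $|\sigma(\pi^* )|=|C^*|$.
   Context: $G=(V,E)$ finite undirected, $\sigma:V\to 2^{[m]}$, $\sigma(\pi)=\bigcup_{v\in\pi}\sigma(v)$. Color-connected: for each color $c$ the vertices whose color set contains $c$ induce a connected subgraph. $V(C)=\{v:\sigma(v)\cap C\ne\emptyset\}$. $S\subseteq[m]$ is an $s$-$t$ color separator if no $s$-$t$ path in $G$ avoids $V(S)$. A color-hitting set is a set $C\subseteq[m]$ with $C\cap S\ne\emptyset$ for all $s$-$t$ color separators $S$. *)

(* Defs.v *)
From Stdlib Require Import Reals.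
From mathcomp Require Import all_boot.

Set Implicit Arguments.
Unset Strict Implicit.
Unset Printing Implicit Defensive.

Definition simple_graph (V : finType) (e : rel V) : Prop :=
  symmetric e /\ irreflexive e.

Definition point := (R * R)%type.

Definition cont_curve (g : R -> point) : Prop :=
  (forall x, continuity_pt (fun y => fst (g y)) x) /\
  (forall x, continuity_pt (fun y => snd (g y)) x).

Definition in01 (x : R) : Prop := Rle 0 x /\ Rle x 1.
Definition in01o (x : R) : Prop := Rlt 0 x /\ Rlt x 1.

Definition planar (V : finType) (e : rel V) : Prop :=
  exists (pos : V -> point) (arc : V -> V -> R -> point),
    injective pos /\
    forall u v, e u v ->
      cont_curve (arc u v) /\
          arc u v R0 = pos u /\ arc u v R1 = pos v /\
          (forall x, arc v u x = arc u v (Rminus 1 x)) /\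
          (forall x y, in01 x -> in01 y -> arc u v x = arc u v y -> x = y) /\
          (forall x w, in01o x -> arc u v x <> pos w) /\
          (forall u' v' x y, e u' v' -> ~ (u' = u /\ v' = v) ->
             ~ (u' = v /\ v' = u) -> in01o x -> in01o y ->
             arc u v x <> arc u' v' y).

Definition colors_of (V : finType) (m : nat) (sigma : V -> {set 'I_m})
    (p : seq V) : {set 'I_m} :=
  \bigcup_(v <- p) sigma v.

(* p is a list of vertices x :: p forming an s-t path (walk) in e:
   the path is s :: p, with consecutive vertices adjacent, ending at t. *)
Definition st_path (V : finType) (e : rel V) (s t : V) (p : seq V) : Prop :=
  path e s p /\ last s p = t.

Definition path_vertices (V : finType) (s : V) (p : seq V) : seq V := s :: p.

Definition color_connected (V : finType) (e : rel V) (m : nat)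
    (sigma : V -> {set 'I_m}) : Prop :=
  forall c : 'I_m, forall u v : V, c \in sigma u -> c \in sigma v ->
    exists p : seq V,
      [/\ path e u p, last u p = v & all (fun w => c \in sigma w) p].

Definition VC (V : finType) (m : nat) (sigma : V -> {set 'I_m})
    (C : {set 'I_m}) : {set V} :=
  [set v | [exists c in C, c \in sigma v]].

Definition color_separator (V : finType) (e : rel V) (m : nat)
    (sigma : V -> {set 'I_m}) (s t : V) (S : {set 'I_m}) : Prop :=
  forall p : seq V, st_path e s t p ->
    has (fun v => v \in VC sigma S) (path_vertices s p).

Definition color_hitting_set (V : finType) (e : rel V) (m : nat)
    (sigma : V -> {set 'I_m}) (s t : V) (C : {set 'I_m}) : Prop :=
  forall S : {set 'I_m}, color_separator e sigma s t S -> C :&: S != set0.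

(* Main.v *)
Require Import Defs.
From Stdlib Require Import Reals Classical.
From mathcomp Require Import all_boot.

Lemma colors_sub (V : finType) (m : nat) (sigma : V -> {set 'I_m}) (p : seq V)
  (C : {set 'I_m}) : (forall v, v \in p -> sigma v \subset C) ->
  colors_of sigma p \subset C.
Proof.
move=> H; rewrite /colors_of bigcup_seq; apply/bigcupsP => v vp; exact: H.
Qed.

Lemma colors_in (V : finType) (m : nat) (sigma : V -> {set 'I_m}) (p : seq V)
  v c : v \in p -> c \in sigma v -> c \in colors_of sigma p.
Proof.
move=> vp cv; rewrite /colors_of bigcup_seq; apply/bigcupP; by exists v.
Qed.

Theorem lemma2p2 (V : finType) (e : rel V) (m : nat)
    (sigma : V -> {set 'I_m}) (s t : V)
    (Hsimple : simple_graph e) (Hplanar : planar e)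
    (Hcc : color_connected e sigma)
    (Hst : exists p : seq V, st_path e s t p)
    (pstar : seq V) (Hpstar : st_path e s t pstar)
    (Hpmin : forall p : seq V, st_path e s t p ->
       #|colors_of sigma (path_vertices s pstar)| <= #|colors_of sigma (path_vertices s p)|)
    (Cstar : {set 'I_m}) (HC : color_hitting_set e sigma s t Cstar)
    (HCmin : forall C : {set 'I_m}, color_hitting_set e sigma s t C ->
       #|Cstar| <= #|C|) :
  #|colors_of sigma (path_vertices s pstar)| = #|Cstar|.
Proof.
apply/eqP; rewrite eqn_leq; apply/andP; split.
- have Hns : ~ color_separator e sigma s t (~: Cstar).
    move=> Hsep; have := HC _ Hsep; by rewrite setICr eqxx.
  have [p Hp] : exists p, ~ (st_path e s t p ->
      has (fun v => v \in VC sigma (~: Cstar)) (path_vertices s p)).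
    by apply: not_all_ex_not.
  have [Hsp Hh] : st_path e s t p /\
      ~ has (fun v => v \in VC sigma (~: Cstar)) (path_vertices s p).
    split; first by apply: NNPP => H; apply: Hp => /H.
    by move=> H; apply: Hp.
  apply: leq_trans (Hpmin _ Hsp) _; apply: subset_leq_card.
  apply: colors_sub => v vp; apply/subsetP => c cv.
  apply: contraT => cC; exfalso; apply: Hh; apply/hasP; exists v => //.
  by rewrite inE; apply/existsP; exists c; rewrite inE cC cv.
- apply: HCmin => S Hsep; apply/set0Pn.
  have /hasP [v vp] := Hsep _ Hpstar.
  rewrite inE => /existsP [c /andP [cS cv]].
  by exists c; rewrite inE cS (@colors_in _ _ sigma _ _ _ vp cv).
Qed.
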